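(* In any unit-weight graph with $\mathsf{OPT}<\mathsf{OPT}^{\mathsf{stable}}$, there exists a binary signaling scheme that is persuasive and has cost strictly lower than $\mathsf{OPT}^{\mathsf{stable}}$.
   Context: Setting. $V$ is a finite set of $n$ task types and $W=(W_{u,v})_{u,v\in V}$ is a symmetric matrix with entries in $\{0,1\}$ and $W_{v,v}=1$ for all $v$ (a unit-weight graph $G=(V,E)$ with $E=\{\{u,v\}:u\ne v,W_{u,v}=1\}$). A vector $\theta\in\mathbb{R}_{\ge0}^V$ is feasible if $W\theta\ge\mathbf 1$ coordinatewise, and stable if it is feasible and for every $v$, $\theta_v=\min\{x\ge0: x+\sum_{v'\neq v}W_{v,v'}\theta_{v'}\ge1\}$. $\mathsf{OPT}=\min\{\|\theta\|_1:\theta\ge0\text{ feasible}\}$ and $\mathsf{OPT}^{\mathsf{stable}}=\min\{\|\theta\|_1:\theta\text{ stable}\}$. Signaling. There are $n$ agents; the type profile $t=(t_1,\dots,t_n)$ is a uniformly random bijection $[n]\to V$. A signaling scheme with finite signal space $\Sigma\subset[0,1]$ is a map $\varphi$ assigning to each bijection $t$ a distribution $\varphi(t)$ on $\Sigma^V$; given $t$, $s\sim\varphi(t)$ is drawn and agent $i$ privately receives $s_{t_i}$. For agent $i$, a signal $\theta\in\Sigma$ with $\Pr[s_{t_i}=\theta]>0$ and $x\ge0$, let $Q_i(x\mid\theta)=\mathbb{E}\big[x+\sum_{v'\neq t_i}W_{t_i,v'}s_{v'}\,\big|\,s_{t_i}=\theta\big]$. The scheme is persuasive if for every agent $i$ and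 every such $\theta$: $Q_i(\theta\mid\theta)\ge1$ and $\theta=\min\{x\ge0:Q_i(x\mid\theta)\ge1\}$. Its cost is $\mathbb{E}[\|s\|_1]$. Binary means $|\Sigma|=2$. *)

(* Defs.v *)
From HB Require Import structures.
From mathcomp Require Import all_boot all_order all_algebra.
From mathcomp Require Import boolp classical_sets reals.
Set Implicit Arguments. Unset Strict Implicit. Unset Printing Implicit Defensive.
Import Order.TTheory GRing.Theory Num.Theory.
Local Open Scope ring_scope.
Local Open Scope classical_set_scope.

Section Defs.
Variables (R : realType) (V : finType).

Definition is_minimum (S : R -> Prop) (m : R) : Prop :=
  S m /\ (forall x, S x -> m <= x).

Definition unit_weight (W : V -> V -> R) : Prop :=
  [/\ forall u v, W u v = 0 \/ W u v = 1,
      forall u v, W u v = W v u &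
      forall v, W v v = 1].

Definition feasible (W : V -> V -> R) (theta : V -> R) : Prop :=
  (forall v, 0 <= theta v) /\ (forall u, 1 <= \sum_(v : V) W u v * theta v).

Definition stable (W : V -> V -> R) (theta : V -> R) : Prop :=
  feasible W theta /\
  forall v, is_minimum
    (fun x => 0 <= x /\ 1 <= x + \sum_(v' : V | v' != v) W v v' * theta v')
    (theta v).

Definition OPT (W : V -> V -> R) : R :=
  inf [set y | exists theta, feasible W theta /\ y = \sum_(v : V) theta v].

Definition OPT_stable (W : V -> V -> R) : R :=
  inf [set y | exists theta, stable W theta /\ y = \sum_(v : V) theta v].

(* Agents are 'I_#|V|; a type profile is a bijection
   t : 'I_#|V| -> V (an injective finfun), drawn uniformly.
   The signal space Sigma has k elements, given by an injective map
   sig : 'I_k -> R; a signal vector in Sigma^V is s : {ffun V -> 'I_k}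
   (the actual value of coordinate v is sig (s v)).
   A scheme phi gives, for each profile t, the probability phi t s of
   drawing signal vector s. *)
Notation profile := {ffun 'I_#|V| -> V}.

Definition is_bij (t : profile) : bool := injectiveb t.

Definition nbij : R := #|[set t : profile | is_bij t]|%:R.

Variables (k : nat) (sig : 'I_k -> R).

Definition signal_space_ok : Prop :=
  injective sig /\ (forall j, 0 <= sig j <= 1).

Definition scheme_ok (phi : profile -> {ffun V -> 'I_k} -> R) : Prop :=
  (forall t s, 0 <= phi t s) /\
  (forall t, is_bij t -> \sum_(s : {ffun V -> 'I_k}) phi t s = 1).

Variable phi : profile -> {ffun V -> 'I_k} -> R.

Definition pj (t : profile) (s : {ffun V -> 'I_k}) : R :=
  (is_bij t)%:R / nbij * phi t s.

Definition PrSig (i : 'I_#|V|) (j : 'I_k) : R :=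
  \sum_(t : profile) \sum_(s : {ffun V -> 'I_k})
     pj t s * (s (t i) == j)%:R.

(* Q_i(x | sig j) = E[ x + sum_{v' <> t_i} W_{t_i,v'} s_{v'} | s_{t_i} = sig j ] *)
Definition Q (W : V -> V -> R) (i : 'I_#|V|) (x : R) (j : 'I_k) : R :=
  (\sum_(t : profile) \sum_(s : {ffun V -> 'I_k})
     pj t s * (s (t i) == j)%:R *
       (x + \sum_(v' : V | v' != t i) W (t i) v' * sig (s v')))
  / PrSig i j.

Definition persuasive (W : V -> V -> R) : Prop :=
  forall (i : 'I_#|V|) (j : 'I_k), 0 < PrSig i j ->
    1 <= Q W i (sig j) j /\
    is_minimum (fun x => 0 <= x /\ 1 <= Q W i x j) (sig j).

Definition cost : R :=
  \sum_(t : profile) \sum_(s : {ffun V -> 'I_k})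
     pj t s * \sum_(v : V) `|sig (s v)|.

End Defs.

(* Main.v *)
Require Import Defs.
From HB Require Import structures.
From mathcomp Require Import all_boot all_order all_algebra.
From mathcomp Require Import boolp classical_sets reals.
From mathcomp Require Import ring lra.
Import Order.TTheory GRing.Theory Num.Theory.
Local Open Scope ring_scope.


Section Prod.
Variables (R : realType) (V : finType) (q : V -> R).

Definition sg2 (j : 'I_2) : R := (j : nat)%:R.
Definition F2 (v : V) (j : 'I_2) : R := sg2 j * q v + (1 - sg2 j) * (1 - q v).
Definition mu (s : {ffun V -> 'I_2}) : R := \prod_v F2 v (s v).

Lemma sum_ord2 (G : 'I_2 -> R) : \sum_(j < 2) G j = G ord0 + G ord_max.
Proof. rewrite !big_ord_recr big_ord0 /= add0r; congr (G _ + _); exact/val_inj. Qed.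

Lemma sum_prodA (G : V -> 'I_2 -> R) :
  \sum_(s : {ffun V -> 'I_2}) \prod_v G v (s v) = \prod_v (\sum_(j < 2) G v j).
Proof. by rewrite bigA_distr_bigA. Qed.

Lemma prod_pred1 (v : V) (a : R) : \prod_u (if u == v then a else 1) = a.
Proof. by rewrite -big_mkcond big_pred1_eq. Qed.

Lemma sumF2 v : \sum_(j < 2) F2 v j = 1.
Proof. rewrite sum_ord2 /F2 /sg2 /=. rewrite mulr0n mulr1n. ring. Qed.

Lemma sumF2s v : \sum_(j < 2) F2 v j * sg2 j = q v.
Proof. rewrite sum_ord2 /F2 /sg2 /=. rewrite mulr0n mulr1n. ring. Qed.

Lemma mu_sum : \sum_s mu s = 1.
Proof.
rewrite /mu sum_prodA; under eq_bigr do rewrite sumF2. by rewrite big1.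
Qed.

Lemma mu_marg v : \sum_s mu s * sg2 (s v) = q v.
Proof.
transitivity (\sum_(s : {ffun V -> 'I_2}) \prod_u (F2 u (s u) * (if u == v then sg2 (s u) else 1))).
  apply: eq_bigr => s _; rewrite big_split /= /mu; congr (_ * _).
  by rewrite -big_mkcond big_pred1_eq.
rewrite (sum_prodA (fun u j => F2 u j * (if u == v then sg2 j else 1))) -(prod_pred1 v (q v)); apply: eq_bigr => u _.
case: eqP => [->|_]; first by rewrite sumF2s.
under eq_bigr do rewrite mulr1. by rewrite sumF2.
Qed.

Lemma mu_marg2 v v' : v != v' -> \sum_s mu s * sg2 (s v) * sg2 (s v') = q v * q v'.
Proof.
move=> nvv.
transitivity (\sum_(s : {ffun V -> 'I_2}) \prod_u (F2 u (s u) * (if u == v then sg2 (s u) else 1) * (if u == v' then sg2 (s u) else 1))).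
  apply: eq_bigr => s _; rewrite big_split big_split /= /mu; congr (_ * _ * _).
    by rewrite -big_mkcond big_pred1_eq.
  by rewrite -big_mkcond big_pred1_eq.
rewrite (sum_prodA (fun u j => F2 u j * (if u == v then sg2 j else 1) * (if u == v' then sg2 j else 1))).
transitivity (\prod_u ((if u == v then q v else 1) * (if u == v' then q v' else 1))).
  apply: eq_bigr => u _.
  case: (eqVneq u v) => [->|nuv].
    rewrite (negbTE nvv) ?eqxx. under eq_bigr do rewrite mulr1. by rewrite sumF2s mulr1.
  case: (eqVneq u v') => [->|nuv'].
    rewrite ?eqxx. under eq_bigr do rewrite mulr1. by rewrite sumF2s mul1r.
  under eq_bigr do rewrite !mulr1. by rewrite sumF2 mulr1.
by rewrite big_split /= !prod_pred1.
Qed.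

Lemma mu_ge0 : (forall v, 0 <= q v <= 1) -> forall s, 0 <= mu s.
Proof.
move=> hq s; apply: prodr_ge0 => v _; rewrite /F2 /sg2.
have /andP[h0 h1] := hq v.
case: (s v) => [[|[|m]] hm] //=; rewrite ?mulr0n ?mulr1n; lra.
Qed.
End Prod.


Section Count.
Variables (R : realType) (V : finType).
Notation profile := {ffun 'I_#|V| -> V}.

Definition sw (a b x : V) := if x == a then b else if x == b then a else x.
Lemma swK a b : involutive (sw a b).
Proof.
move=> x; rewrite /sw.
case: (eqVneq x a) => [->|xa]; first by rewrite eqxx; case: eqP.
case: (eqVneq x b) => [->|xb]; first by rewrite eqxx.
by rewrite (negbTE xa) (negbTE xb).
Qed.
Lemma sw_inj a b : injective (sw a b). Proof. exact: (can_inj (swK a b)). Qed.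
Lemma sw_eq a b x : (sw a b x == a) = (x == b).
Proof.
rewrite /sw; case: (eqVneq x a) => [xa|xa].
  by rewrite xa eq_sym.
case: (eqVneq x b) => [xb|xb].
  by rewrite eqxx.
by rewrite (negbTE xa).
Qed.

Definition swp a b (t : profile) : profile := [ffun k => sw a b (t k)].
Lemma swpK a b : involutive (swp a b).
Proof. by move=> t; apply/ffunP => k; rewrite !ffunE swK. Qed.
Lemma swp_inj a b : injective (swp a b). Proof. exact: (can_inj (swpK a b)). Qed.
Lemma bij_swp a b t : is_bij (swp a b t) = is_bij t.
Proof.
rewrite /is_bij; apply/injectiveP/injectiveP => h x y e.
  by apply: h; rewrite !ffunE e.
by apply: h; move: e; rewrite !ffunE => /sw_inj.
Qed.

Definition hc (i : 'I_#|V|) (v : V) : R := \sum_(t : profile) (is_bij t && (t i == v))%:R.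

Lemma hc_const i a b : hc i a = hc i b.
Proof.
rewrite /hc (reindex_inj (swp_inj a b)); apply: eq_bigr => t _.
by rewrite bij_swp ffunE sw_eq.
Qed.

Lemma nbij_sum : nbij R V = \sum_(t : profile) (is_bij t)%:R.
Proof.
rewrite /nbij.
have -> : \sum_(t : profile) (is_bij t)%:R = \sum_(t in [set t : profile | is_bij t]) (1 : R).
  by rewrite [RHS]big_mkcond; apply: eq_bigr => t _; rewrite inE; case: (is_bij t).
rewrite sumr_const; congr (_%:R); apply: eq_card => t; rewrite !inE; exact: asboolb.
Qed.

Lemma nbij_gt0 : 0 < nbij R V.
Proof.
rewrite /nbij ltr0n; apply/card_gt0P.
exists [ffun k => enum_val k]; rewrite inE /= /is_bij; apply/injectiveP => x y.
by rewrite !ffunE => /enum_val_inj.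
Qed.

Lemma count_sum i (K : V -> R) :
  \sum_(t : profile) (is_bij t)%:R / nbij R V * K (t i) = (#|V|%:R)^-1 * \sum_v K v.
Proof.
set v0 : V := enum_val i.
have nb0 := nbij_gt0.
have n0 : (0 : R) < #|V|%:R by rewrite ltr0n; apply: (leq_ltn_trans _ (ltn_ord i)).
have e1 : \sum_(t : profile) (is_bij t)%:R * K (t i) = hc i v0 * \sum_v K v.
  transitivity (\sum_(t : profile) \sum_v (is_bij t && (t i == v))%:R * K v).
    apply: eq_bigr => t _; rewrite (bigD1 (t i)) //= eqxx andbT big1 ?addr0 //.
    by move=> v; rewrite eq_sym => /negbTE ->; rewrite andbF mul0r.
  rewrite exchange_big mulr_sumr; apply: eq_bigr => v _.
  by rewrite -mulr_suml -/(hc i v) (hc_const i v v0).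
have e2 : nbij R V = #|V|%:R * hc i v0.
  rewrite nbij_sum.
  transitivity (\sum_(t : profile) \sum_v (is_bij t && (t i == v))%:R : R).
    apply: eq_bigr => t _; rewrite (bigD1 (t i)) //= eqxx andbT big1 ?addr0 //.
    by move=> v; rewrite eq_sym => /negbTE ->; rewrite andbF.
  rewrite exchange_big /=.
  transitivity (\sum_(v : V) hc i v0); first by apply: eq_bigr => v _; rewrite -/(hc i v) (hc_const i v v0).
  by rewrite sumr_const mulr_natl.
transitivity ((nbij R V)^-1 * \sum_(t : profile) (is_bij t)%:R * K (t i)).
  by rewrite mulr_sumr; apply: eq_bigr => t _; rewrite [_ / _]mulrC -mulrA.
rewrite e1 e2.
have h0 : hc i v0 != 0.
  by apply/eqP => h; move: nb0; rewrite e2 h mulr0 ltxx.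
field. by rewrite h0 /= lt0r_neq0.
Qed.
End Count.


Section Greedy.
Variables (R : realType) (V : finType) (W : V -> V -> R) (w : V -> R).
Hypothesis W01 : forall u v, W u v = 0 \/ W u v = 1.
Hypothesis Wsym : forall u v, W u v = W v u.
Hypothesis Wdiag : forall v, W v v = 1.

Lemma greedy_n m : forall S : {set V}, (#|S| <= m)%N -> exists (D : {set V}) (f : V -> V),
  [/\ D \subset S, (forall d d', d \in D -> d' \in D -> d != d' -> W d d' = 0) &
      (forall u, u \in S -> [/\ f u \in D, W u (f u) = 1 & w u <= w (f u)])].
Proof.
elim: m => [|m IH] S hS.
  have S0 : S = finset.set0 by apply/eqP; rewrite -cards_eq0 -leqn0.
  exists finset.set0, id; split; first by rewrite finset.sub0set.
    by move=> d d'; rewrite inE.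
  by move=> u; rewrite S0 inE.
case: (set_0Vmem S) => [S0|[x xS]].
  exists finset.set0, id; split; first by rewrite finset.sub0set.
    by move=> d d'; rewrite inE.
  by move=> u; rewrite S0 inE.
case: (@arg_maxP _ _ _ x (mem S) w xS) => d dS dmax.
set S' := S :\: [set u | W d u == 1].
have dS0 : d \in S by [].
have dS' : d \notin S' by rewrite !inE Wdiag eqxx.
have hS' : (#|S'| <= m)%N.
  have : (#|S'| < #|S|)%N.
    apply: proper_card; apply/properP; split; first exact: subsetDl.
    by exists d.
  move=> h; rewrite -ltnS; exact: (leq_trans h hS).
have [D' [f' [D'S' D'ind D'f']]] := IH S' hS'.
exists (d |: D'), (fun u => if u \in S' then f' u else d); split.
- apply/fintype.subsetP => y; rewrite !inE => /orP[/eqP->//|yD].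
  by have := fintype.subsetP D'S' y yD; rewrite !inE => /andP[].
- have key : forall y, y \in D' -> W d y = 0.
    move=> y yD; have := fintype.subsetP D'S' y yD; rewrite !inE => /andP[h _].
    by case: (W01 d y) => // e; rewrite e eqxx in h.
  move=> a b; rewrite !inE => /orP[/eqP->|aD] /orP[/eqP->|bD]; rewrite ?eqxx //.
  + by move=> _; apply: key.
  + by move=> _; rewrite Wsym; apply: key.
  + exact: D'ind.
- move=> u uS; case: ifP => uS'.
    have [h1 h2 h3] := D'f' u uS'; split=> //; by rewrite inE h1 orbT.
  split; first by rewrite !inE eqxx.
    move: uS'; rewrite !inE uS andbT => /negbFE /eqP; by rewrite Wsym.
  exact: dmax.
Qed.
End Greedy.


Section Scheme.
Variables (R : realType) (V : finType) (W : V -> V -> R) (q : V -> R).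
Hypothesis W01 : forall u v, W u v = 0 \/ W u v = 1.
Hypothesis Wsym : forall u v, W u v = W v u.
Hypothesis Wdiag : forall v, W v v = 1.
Hypothesis q01 : forall v, 0 <= q v <= 1.
Hypothesis qind : forall v v', v != v' -> W v v' = 1 -> q v * q v' = 0.
Hypothesis qcov : #|V|%:R <= \sum_v q v * \sum_u W v u.

Notation profile := {ffun 'I_#|V| -> V}.
Definition sig2 : 'I_2 -> R := sg2 R.
Definition phi2 (t : profile) (s : {ffun V -> 'I_2}) : R := mu R V q s.

Lemma sg2_01 a : sg2 R a = 0 \/ sg2 R a = 1.
Proof. by case: a => [[|[|k]] h] //=; [left|right]. Qed.

Lemma ind2 (a j : 'I_2) : (a == j)%:R = sg2 R a * sg2 R j + (1 - sg2 R a) * (1 - sg2 R j).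
Proof.
by case: a => [[|[|k]] ha] //; case: j => [[|[|k']] hj] //; rewrite /sg2 /= ?mulr0n ?mulr1n; ring. Qed.

Lemma avg_sum i (H : V -> {ffun V -> 'I_2} -> R) :
  \sum_(t : profile) \sum_(s : {ffun V -> 'I_2}) pj phi2 t s * H (t i) s =
  (#|V|%:R)^-1 * \sum_v \sum_s mu R V q s * H v s.
Proof.
rewrite -(count_sum R V i); apply: eq_bigr => t _.
rewrite mulr_sumr; apply: eq_bigr => s _; rewrite /pj /phi2; ring.
Qed.

Lemma mu_lin (a : R) (G : {ffun V -> 'I_2} -> R) :
  \sum_s mu R V q s * (a * G s) = a * \sum_s mu R V q s * G s.
Proof. rewrite mulr_sumr; apply: eq_bigr => s _; ring. Qed.

Lemma E_N v : \sum_s mu R V q s * (\sum_(v' | v' != v) W v v' * sig2 (s v')) =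
  \sum_(v' | v' != v) W v v' * q v'.
Proof.
under eq_bigr do rewrite mulr_sumr.
rewrite exchange_big; apply: eq_bigr => v' _.
rewrite -(mu_marg R V q v') mulr_sumr; apply: eq_bigr => s _; rewrite /sig2; ring.
Qed.

Lemma E_sN v : \sum_s mu R V q s * (sig2 (s v) * \sum_(v' | v' != v) W v v' * sig2 (s v')) = 0.
Proof.
under eq_bigr do rewrite mulr_sumr mulr_sumr.
rewrite exchange_big big1 // => v' nv.
transitivity (W v v' * \sum_s mu R V q s * sg2 R (s v) * sg2 R (s v')).
  rewrite mulr_sumr; apply: eq_bigr => s _; rewrite /sig2; ring.
rewrite mu_marg2; last by rewrite eq_sym.
case: (W01 v v') => e; first by rewrite e mul0r.
by rewrite e (qind v v') ?mulr0 // eq_sym.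
Qed.


Lemma ind_1 a (hj : (1 < 2)%N) : (a == Ordinal hj)%:R = sg2 R a.
Proof. by rewrite ind2 /sg2 /= mulr1n; ring. Qed.
Lemma ind_0 a (hj : (0 < 2)%N) : (a == Ordinal hj)%:R = 1 - sg2 R a.
Proof. by rewrite ind2 /sg2 /= mulr0n; ring. Qed.

Notation N v s := (\sum_(v' | v' != v) W v v' * sig2 (s v')).

Lemma PrSig_eq i j : PrSig phi2 i j = (#|V|%:R)^-1 * \sum_v \sum_s mu R V q s * (s v == j)%:R.
Proof. by rewrite /PrSig (avg_sum i (fun v s => (s v == j)%:R)). Qed.

Lemma Qnum_eq i x j :
  \sum_(t : profile) \sum_(s : {ffun V -> 'I_2}) pj phi2 t s * (s (t i) == j)%:R * (x + N (t i) s) =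
  (#|V|%:R)^-1 * \sum_v \sum_s mu R V q s * ((s v == j)%:R * (x + N v s)).
Proof.
rewrite -(avg_sum i (fun v s => (s v == j)%:R * (x + N v s))).
by apply: eq_bigr => t _; apply: eq_bigr => s _; rewrite mulrA.
Qed.

Lemma M1 v : \sum_s mu R V q s * sg2 R (s v) = q v.
Proof. exact: mu_marg. Qed.

Lemma M0 v : \sum_s mu R V q s * (1 - sg2 R (s v)) = 1 - q v.
Proof.
have -> : 1 - q v = \sum_s mu R V q s - \sum_s mu R V q s * sg2 R (s v) by rewrite mu_sum M1.
rewrite -sumrB; apply: eq_bigr => s _; ring.
Qed.

Lemma R1 v x : \sum_s mu R V q s * (sg2 R (s v) * (x + N v s)) = x * q v.
Proof.
transitivity (\sum_s mu R V q s * (x * sg2 R (s v)) + \sum_s mu R V q s * (sig2 (s v) * N v s)).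
  rewrite -big_split; apply: eq_bigr => s _ /=; rewrite /sig2; ring.
by rewrite E_sN addr0 mu_lin M1.
Qed.

Lemma R0 v x : \sum_s mu R V q s * ((1 - sg2 R (s v)) * (x + N v s)) =
  x * (1 - q v) + \sum_(v' | v' != v) W v v' * q v'.
Proof.
transitivity (\sum_s mu R V q s * (x * (1 - sg2 R (s v))) + \sum_s mu R V q s * (N v s)
   - \sum_s mu R V q s * (sig2 (s v) * N v s)).
  rewrite -big_split -sumrB; apply: eq_bigr => s _ /=; rewrite /sig2; ring.
by rewrite E_sN subr0 mu_lin M0 E_N.
Qed.

Lemma keyA : \sum_v (1 - q v) <= \sum_v \sum_(v' | v' != v) W v v' * q v'.
Proof.
have e : forall v, \sum_(v' | v' != v) W v v' * q v' = \sum_v' W v v' * q v' - q v.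
  by move=> v; rewrite [X in _ = X - _](bigD1 v) //= Wdiag mul1r addrC addrK.
under [X in _ <= X]eq_bigr do rewrite e.
rewrite sumrB [X in _ <= X]sumrB lerD2r sumr_const.
apply: (le_trans qcov); rewrite le_eqVlt; apply/orP; left; apply/eqP.
rewrite exchange_big /=; apply: eq_bigr => v _; rewrite mulr_sumr; apply: eq_bigr => u _; rewrite Wsym; ring.
Qed.

Lemma persuasive2 : persuasive sig2 phi2 W.
Proof.
move=> i j; rewrite PrSig_eq => hPr.
have n0 : (0 : R) < #|V|%:R by rewrite ltr0n; apply: (leq_ltn_trans _ (ltn_ord i)).
have Qe : forall x, Q sig2 phi2 W i x j =
   (\sum_v \sum_s mu R V q s * ((s v == j)%:R * (x + N v s))) /
   (\sum_v \sum_s mu R V q s * (s v == j)%:R).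
  move=> x; rewrite /Q Qnum_eq PrSig_eq; field.
  rewrite (lt0r_neq0 n0) andbT; apply/eqP => h; move: hPr; rewrite h mulr0 ltxx //.
case: j hPr Qe => [[|[|k]] hj] // hPr Qe.
-
  have Mpos : 0 < \sum_v (1 - q v).
    move: hPr; under eq_bigr do under eq_bigr do rewrite ind_0.
    under eq_bigr do rewrite M0. by rewrite pmulr_rgt0 // invr_gt0.
  have Qx : forall x, Q sig2 phi2 W i x (Ordinal hj) =
      x + (\sum_v \sum_(v' | v' != v) W v v' * q v') / \sum_v (1 - q v).
    move=> x; rewrite Qe.
    under eq_bigr do under eq_bigr do rewrite ind_0.
    under eq_bigr do rewrite R0.
    under [X in _ / X]eq_bigr do under eq_bigr do rewrite ind_0.
    under [X in _ / X]eq_bigr do rewrite M0.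
    rewrite big_split /= -mulr_sumr; field; exact: lt0r_neq0.
  have h1 : 1 <= Q sig2 phi2 W i 0 (Ordinal hj).
    by rewrite Qx add0r ler_pdivlMr // mul1r keyA.
  rewrite /sig2 /sg2 /= mulr0n; split => //; split => //.
  by move=> x [].
-
  have Mpos : 0 < \sum_v q v.
    move: hPr; under eq_bigr do under eq_bigr do rewrite ind_1.
    under eq_bigr do rewrite M1. by rewrite pmulr_rgt0 // invr_gt0.
  have Qx : forall x, Q sig2 phi2 W i x (Ordinal hj) = x.
    move=> x; rewrite Qe.
    under eq_bigr do under eq_bigr do rewrite ind_1.
    under eq_bigr do rewrite R1.
    under [X in _ / X]eq_bigr do under eq_bigr do rewrite ind_1.
    under [X in _ / X]eq_bigr do rewrite M1.
    rewrite -mulr_sumr; field; exact: lt0r_neq0.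
  have s1 : sig2 (Ordinal hj) = 1 by rewrite /sig2 /sg2 /= mulr1n.
  rewrite s1 Qx; split => //; split; first by split => //; rewrite Qx.
  by move=> x [_]; rewrite Qx.
Qed.

Lemma cost2 (Vne : (0 < #|V|)%N) : cost sig2 phi2 = \sum_v q v.
Proof.
have n0 : (0 : R) < #|V|%:R by rewrite ltr0n.
rewrite /cost (avg_sum (Ordinal Vne) (fun _ s => \sum_v `|sig2 (s v)|)).
have hn : forall x : R, (#|V|%:R)^-1 * (x *+ #|V|) = x.
  by move=> x; rewrite -[x *+ _]mulr_natr mulrCA mulVf ?lt0r_neq0 // mulr1.
rewrite sumr_const hn.
transitivity (\sum_v \sum_s mu R V q s * sg2 R (s v)).
  rewrite exchange_big /=; apply: eq_bigr => s _; rewrite mulr_sumr; apply: eq_bigr => v _.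
  by rewrite ger0_norm // /sig2; case: (sg2_01 (s v)) => ->.
by apply: eq_bigr => v _; rewrite M1.
Qed.

End Scheme.


Section Construct.
Variables (R : realType) (V : finType) (W : V -> V -> R).
Hypothesis W01 : forall u v, W u v = 0 \/ W u v = 1.
Hypothesis Wsym : forall u v, W u v = W v u.
Hypothesis Wdiag : forall v, W v v = 1.

Lemma W_ge0 u v : 0 <= W u v. Proof. by case: (W01 u v) => ->. Qed.

Definition wdeg (u : V) : R := \sum_v W u v.

Lemma stable_tight (th : V -> R) v : stable W th -> 0 < th v -> \sum_u W v u * th u = 1.
Proof.
move=> [_ hmin] hv; have [[_ h1] hle] := hmin v.
rewrite (bigD1 v) //= Wdiag mul1r.
set N := \sum_(u | u != v) W v u * th u in h1 hle *.
case: (lerP 1 N) => hN.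
  have := hle 0; rewrite add0r => /(_ (conj (lexx 0) hN)); lra.
have := hle (1 - N); rewrite subrK => /(_ (conj _ (lexx 1))).
have : 0 <= 1 - N by lra.
move=> h /(_ h); lra.
Qed.

Lemma excess (th th2 : V -> R) : feasible W th -> feasible W th2 -> (forall v, th2 v <= 1) ->
  #|V|%:R + \sum_v th v - \sum_v th2 v <= \sum_u th u * wdeg u.
Proof.
move=> [th0 thf] [t20 t2f] t21.
set A := \sum_v th2 v * \sum_u W v u * th u.
have hA1 : \sum_u th u <= A.
  rewrite /A.
  have -> : \sum_v th2 v * \sum_u W v u * th u = \sum_u th u * \sum_v W u v * th2 v.
    under eq_bigr do rewrite mulr_sumr.
    rewrite exchange_big /=; apply: eq_bigr => u _; rewrite mulr_sumr; apply: eq_bigr => v _.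
    rewrite Wsym; ring.
  apply: ler_sum => u _; have := t2f u; have := th0 u; nra.
have hA2 : A <= \sum_v (th2 v + (\sum_u W v u * th u - 1)).
  apply: ler_sum => v _; have := t2f v; have := t20 v; have := t21 v; have := thf v; nra.
have eS : \sum_v (th2 v + (\sum_u W v u * th u - 1)) =
    \sum_v th2 v + \sum_v \sum_u W v u * th u - #|V|%:R.
  by rewrite big_split sumrB sumr_const /= addrA.
have -> : \sum_u th u * wdeg u = \sum_v \sum_u W v u * th u.
  rewrite exchange_big /=; apply: eq_bigr => u _; rewrite /wdeg mulr_sumr; apply: eq_bigr => v _.
  rewrite Wsym; ring.
lra.
Qed.

Lemma construct (th th2 : V -> R) : stable W th -> feasible W th2 -> (forall v, th2 v <= 1) ->
  \sum_v th2 v < \sum_v th v ->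
  exists q : V -> R, [/\ forall v, 0 <= q v <= 1,
    forall v v', v != v' -> W v v' = 1 -> q v * q v' = 0,
    #|V|%:R <= \sum_v q v * \sum_u W v u &
    (\sum_v q v) * (#|V|%:R + \sum_v th v - \sum_v th2 v) <= #|V|%:R * \sum_v th v].
Proof.
move=> hst hf2 h21 hlt.
have hexc := excess th th2 (proj1 hst) hf2 h21.
have [[th0 thf] _] := hst.
set S := [set u | 0 < th u].
have [D [f [DS Dind Df]]] := greedy_n R V W wdeg W01 Wsym Wdiag #|S| S (leqnn _).
pose p v := \sum_(u | f u == v) th u.
have p0 : forall v, 0 <= p v by move=> v; apply: sumr_ge0.
have pD : forall v, p v != 0 -> v \in D.
  move=> v; apply: contraR => vD; apply/eqP; apply: big1 => u /eqP fu.
  case: (lerP (th u) 0) => h; first by apply/le_anti; rewrite h th0.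
  have uS : u \in S by rewrite inE.
  by have [h1 _ _] := Df u uS; move: h1; rewrite fu (negbTE vD).
have p1 : forall v, p v <= 1.
  move=> v; case: (eqVneq (p v) 0) => [->|/pD vD]; first exact: ler01.
  have vS := fintype.subsetP DS v vD; rewrite inE in vS.
  rewrite -(stable_tight th v hst vS).
  apply: (le_trans (y := \sum_(u | f u == v) W v u * th u)).
    apply: ler_sum => u /eqP fu.
    case: (lerP (th u) 0) => h.
      have -> : th u = 0 by apply/le_anti; rewrite h th0.
      by rewrite mulr0.
    have uS : u \in S by rewrite inE.
    by have [_ h2 _] := Df u uS; rewrite -fu Wsym h2 mul1r.
  rewrite [X in _ <= X](bigID (fun u => f u == v)) /= lerDl.
  by apply: sumr_ge0 => u _; apply: mulr_ge0 => //; exact: W_ge0.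
have sp : \sum_v p v = \sum_u th u.
  by rewrite [RHS](partition_big f predT).
have spw : \sum_v p v * wdeg v = \sum_u th u * wdeg (f u).
  rewrite [RHS](partition_big f predT) //; apply: eq_bigr => v _.
  by rewrite mulr_suml; apply: eq_bigr => u /= /eqP ->.
have hP : \sum_u th u * wdeg u <= \sum_u th u * wdeg (f u).
  apply: ler_sum => u _; case: (lerP (th u) 0) => h.
    have -> : th u = 0 by apply/le_anti; rewrite h th0.
    by rewrite !mul0r.
  have uS : u \in S by rewrite inE.
  by have [_ _ h3] := Df u uS; rewrite ler_wpM2l // ltW.
set P := \sum_v p v * wdeg v.
set n := (#|V|%:R : R).
set T := \sum_v th v.
set c := \sum_v th2 v.
move: hlt hexc; rewrite -/T -/c -/n => hlt hexc.
have n0 : 0 <= n by rewrite /n ler0n.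
have hPge : n + T - c <= P by rewrite /P spw; apply: (le_trans hexc).
have Ppos : 0 < P by lra.
have k0 : 0 <= n / P by rewrite divr_ge0 // ltW.
have k1 : n / P <= 1 by rewrite ler_pdivrMr // mul1r; lra.
exists (fun v => n / P * p v); split.
- move=> v; rewrite mulr_ge0 //=; have := p1 v; have := p0 v; nra.
- move=> v v' nvv e.
  case: (eqVneq (p v) 0) => [->|/pD vD]; first by rewrite !mulr0 mul0r.
  case: (eqVneq (p v') 0) => [->|/pD vD']; first by rewrite !mulr0.
  by move: (Dind v v' vD vD' nvv); rewrite e => /eqP; rewrite oner_eq0.
- have -> : \sum_v n / P * p v * \sum_u W v u = n / P * P.
    by rewrite /P mulr_sumr; apply: eq_bigr => v _; rewrite /wdeg mulrA.
  by rewrite mulfVK ?lt0r_neq0 // lexx.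
- rewrite -mulr_sumr sp -/T.
  have T0 : 0 <= T by apply: sumr_ge0.
  have -> : n / P * T * (n + T - c) = n * T * ((n + T - c) / P) by field; rewrite lt0r_neq0.
  rewrite -[X in _ <= X]mulr1 ler_wpM2l ?mulr_ge0 //.
  by rewrite ler_pdivrMr // mul1r.
Qed.
End Construct.


Theorem theorem1p3 (R : realType) (V : finType) (W : V -> V -> R) :
  unit_weight W ->
  OPT W < OPT_stable W ->
  exists (sig : 'I_2 -> R) (phi : {ffun 'I_#|V| -> V} -> {ffun V -> 'I_2} -> R),
    [/\ signal_space_ok sig, scheme_ok phi,
        persuasive sig phi W & cost sig phi < OPT_stable W].
Proof.
move=> [W01 Wsym Wdiag] hgap.
set FS := [set y | exists th, feasible W th /\ y = \sum_v th v]%classic.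
set SS := [set y | exists th, stable W th /\ y = \sum_v th v]%classic.
have eO : OPT W = inf FS by [].
have eS : OPT_stable W = inf SS by [].
rewrite eO eS in hgap *.
have FS0 : forall y, FS y -> 0 <= y.
  by move=> y [th [[th0 _] ->]]; apply: sumr_ge0.
have SS0 : forall y, SS y -> 0 <= y.
  by move=> y [th [[[th0 _] _] ->]]; apply: sumr_ge0.
have FSne : (FS !=set0)%classic.
  exists (\sum_(v : V) (1 : R)), (fun=> 1); split => //; split => // u.
  rewrite (bigD1 u) //= Wdiag mulr1 lerDl; apply: sumr_ge0 => v _.
  by rewrite mulr1; case: (W01 u v) => ->.
have OPT0 : 0 <= inf FS by apply: lb_le_inf.
have SSne : (SS !=set0)%classic.
  apply: contrapT => hne.
  have : SS = set0.
    by apply/seteqP; split => [y Sy|y []] //; apply: hne; exists y.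
  by move=> e; move: hgap; rewrite e inf0; lra.
have hlbS : has_lbound SS by exists 0.
set ST := inf SS in hgap *.
have [y1 [th1 [hf1 ->]] hy1] := inf_lt FSne hgap.
pose th2 := fun v => Num.min (th1 v) 1.
have hf2 : feasible W th2.
  have [th10 th1f] := hf1.
  split; first by move=> v; rewrite /th2 le_min th10 ler01.
  move=> u; case: (pselect (exists v, W u v = 1 /\ 1 <= th1 v)) => [[v [e h]]|hn].
    rewrite (bigD1 v) //= e mul1r /th2 (min_r h) lerDl.
    apply: sumr_ge0 => x _; apply: mulr_ge0; first by case: (W01 u x) => ->.
    by rewrite le_min th10 ler01.
  apply: (le_trans (th1f u)); rewrite le_eqVlt; apply/orP; left; apply/eqP.
  apply: eq_bigr => v _; case: (W01 u v) => e; rewrite e ?mul0r // !mul1r /th2 min_l //.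
  by rewrite ltW //; rewrite ltNge; apply/negP => h; apply: hn; exists v.
have h21 : forall v, th2 v <= 1 by move=> v; rewrite /th2 ge_min lexx orbT.
have hc : \sum_v th2 v <= \sum_v th1 v by apply: ler_sum => v _; rewrite /th2 ge_min lexx.
set c := \sum_v th2 v in hc h21 *.
have c0 : 0 <= c by apply: sumr_ge0 => v _; exact: (proj1 hf2).
have cST : c < ST by lra.
set n := (#|V|%:R : R).
have n0 : 0 <= n by rewrite /n ler0n.
set dl := ST * (ST - c) / (`|n - ST| + 1).
have dl0 : 0 < dl by rewrite /dl divr_gt0 // ?mulr_gt0 ?subr_gt0 //; [lra | rewrite ltr_wpDl].
have hlt : ST < ST + dl by rewrite ltrDl.
have [y [th [hst ->]] hy] := inf_lt SSne hlt.
have STle : ST <= \sum_v th v by apply: (ge_inf hlbS); exists th.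
set T := \sum_v th v in hy STle.
have cT : c < T by lra.
have [q [q01 qind qcov qcost]] := construct R V W W01 Wsym Wdiag th th2 hst hf2 h21 cT.
have Vne : (0 < #|V|)%N.
  case: (posnP #|V|) => hV //; exfalso.
  have T0 : T = 0.
    rewrite /T; apply: big1 => v _; exfalso.
    have : (0 < #|V|)%N by apply/card_gt0P; exists v.
    by rewrite hV.
  lra.
exists (sig2 R), (phi2 R V q); split.
- split.
    move=> a b; rewrite /sig2 /sg2 => /eqP; rewrite eqr_nat => /eqP h; exact: val_inj.
  by move=> j; rewrite /sig2; case: (sg2_01 R j) => ->; rewrite ?lexx ?ler01.
- split; first by move=> t s; apply: mu_ge0.
  by move=> t _; apply: mu_sum.
- exact: (persuasive2 R V W q W01 Wsym Wdiag qind qcov).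
- rewrite (cost2 R V q Vne).
  set D := n + T - c in qcost.
  have Dpos : 0 < D by rewrite /D; lra.
  have np : 0 < `|n - ST| + 1 by rewrite ltr_wpDl.
  have e1 : dl * (`|n - ST| + 1) = ST * (ST - c).
    by rewrite /dl mulfVK // lt0r_neq0.
  have e2 : (T - ST) * (n - ST) <= (T - ST) * `|n - ST|.
    by rewrite ler_wpM2l ?subr_ge0 // real_ler_norm // num_real.
  have e3 : (T - ST) * `|n - ST| <= dl * `|n - ST|.
    by apply: ler_wpM2r => //; lra.
  have key : n * T < ST * D.
    have : n * T - ST * D = (T - ST) * (n - ST) - ST * (ST - c) by rewrite /D; ring.
    have : dl * `|n - ST| < dl * (`|n - ST| + 1) by rewrite ltr_pM2l // ltrDl.
    lra.
  rewrite -(ltr_pM2r Dpos); exact: (le_lt_trans qcost key).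
Qed.
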